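(* Define functions $v_n,\widetilde v_n:[0,1]\to\mathbb{R}$ for $n\ge 0$ by $v_0\equiv\widetilde v_0\equiv 0$ and, for $n\ge1$ and $0\le x\le 1$, $$ v_n(x)=(1-x)\,v_{n-1}(x)+\int_0^x \max\{v_{n-1}(x),\,1+v_{n-1}(x-y)\}\,dy, $$ $$ \widetilde v_n(x)=(1-x)\,\widetilde v_{n-1}(x)+\int_0^x \max\{\widetilde v_{n-1}(x),\,1+\widetilde v_{n-1}(y)\}\,dy. $$ Then $v_n(x)=\widetilde v_n(x)$ for all $n\ge 0$ and all $0\le x\le 1$.
   Context: These are the Bellman equations, for observations uniformly distributed on $[0,1]$, of the sequential knapsack problem (maximize the expected number of items selected with total size at most the capacity $x$) and of the sequential monotone decreasing subsequence selection problem (state $x$ = last selected value), respectively, with $n$ observations remaining. *)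

(* Defs.v *)
From Stdlib Require Import Reals ClassicalEpsilon.
Open Scope R_scope.

(* Total Riemann integral: RiemannInt when f is Riemann integrable on [a,b]
   (value independent of the integrability proof, RiemannInt_P5), else 0. *)
Definition RInt (f : R -> R) (a b : R) : R :=
  match excluded_middle_informative (inhabited (Riemann_integrable f a b)) with
  | left H => RiemannInt (epsilon H (fun _ => True))
  | right _ => 0
  end.

Fixpoint v (n : nat) (x : R) : R :=
  match n with
  | O => 0
  | S m => (1 - x) * v m x + RInt (fun y => Rmax (v m x) (1 + v m (x - y))) 0 x
  end.

Fixpoint vt (n : nat) (x : R) : R :=
  match n with
  | O => 0
  | S m => (1 - x) * vt m x + RInt (fun y => Rmax (vt m x) (1 + vt m y)) 0 x
  end.

(* Main.v *)
Require Import Defs.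
From Stdlib Require Import Reals.
Open Scope R_scope.
From Stdlib Require Import Lra ClassicalEpsilon.
From Coquelicot Require Import Coquelicot.

Lemma DR_eq (f : R -> R) a b : ex_RInt f a b -> Defs.RInt f a b = RInt f a b.
Proof.
  intro H. unfold Defs.RInt.
  destruct (excluded_middle_informative _) as [i|n].
  - rewrite (RInt_Reals f a b (ex_RInt_Reals_0 f a b H)). apply RiemannInt_P5.
  - exfalso. apply n. constructor. now apply ex_RInt_Reals_0.
Qed.

Lemma DR_0 (f : R -> R) a b : ~ ex_RInt f a b -> Defs.RInt f a b = 0.
Proof.
  intro H. unfold Defs.RInt.
  destruct (excluded_middle_informative _) as [[i]|n]; auto.
  exfalso. apply H. now apply ex_RInt_Reals_1.
Qed.

Lemma DR_ext (f g : R -> R) a b : (forall y, Rmin a b < y < Rmax a b -> f y = g y) ->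
  Defs.RInt f a b = Defs.RInt g a b.
Proof.
  intro E. destruct (classic (ex_RInt f a b)) as [H|H].
  - rewrite !DR_eq; auto. now apply RInt_ext. now apply (ex_RInt_ext f).
  - rewrite !DR_0; auto. intro H'. apply H. apply (ex_RInt_ext g); auto.
    intros; symmetry; auto.
Qed.

Lemma refl_ex (h : R -> R) x : ex_RInt h 0 x -> ex_RInt (fun y => h (x - y)) 0 x.
Proof.
  intro H. pose proof (ex_RInt_comp_lin h (-1) x 0 x) as H1.
  replace (-1*0+x) with x in H1 by ring. replace (-1*x+x) with 0 in H1 by ring.
  specialize (H1 (ex_RInt_swap _ _ _ H)).
  apply ex_RInt_opp in H1. eapply ex_RInt_ext; [|exact H1].
  intros y _. unfold scal, opp; simpl. unfold mult; simpl.
  replace (-1*y+x) with (x-y) by ring. ring.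
Qed.

Lemma refl_val (h : R -> R) x : ex_RInt h 0 x -> RInt (fun y => h (x - y)) 0 x = RInt h 0 x.
Proof.
  intro H. pose proof (RInt_comp_lin h (-1) x 0 x) as H1.
  replace (-1*0+x) with x in H1 by ring. replace (-1*x+x) with 0 in H1 by ring.
  specialize (H1 (ex_RInt_swap _ _ _ H)).
  rewrite <- (opp_RInt_swap h 0 x H) in H1.
  pose proof (ex_RInt_comp_lin h (-1) x 0 x) as H2.
  replace (-1*0+x) with x in H2 by ring. replace (-1*x+x) with 0 in H2 by ring.
  specialize (H2 (ex_RInt_swap _ _ _ H)).
  rewrite (RInt_ext _ (fun y => opp (scal (-1) (h (-1 * y + x))))).
  - etransitivity. apply (RInt_opp _ 0 x H2). etransitivity. apply f_equal. exact H1. unfold opp; simpl. ring.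
  - intros y _. unfold scal, opp; simpl. unfold mult; simpl.
    replace (-1*y+x) with (x-y) by ring. ring.
Qed.

Lemma DR_refl (h : R -> R) x : Defs.RInt (fun y => h (x - y)) 0 x = Defs.RInt h 0 x.
Proof.
  destruct (classic (ex_RInt h 0 x)) as [H|H].
  - rewrite !DR_eq; auto. now apply refl_val. now apply refl_ex.
  - rewrite !DR_0; auto. intro H'. apply H. apply refl_ex in H'.
    eapply ex_RInt_ext; [|exact H']. intros y _. simpl. f_equal; ring.
Qed.

Theorem proposition1 : forall (n : nat) (x : R), 0 <= x <= 1 -> v n x = vt n x.
Proof.
  induction n as [|m IH]; intros x Hx; simpl; auto.
  rewrite IH by exact Hx.
  f_equal.
  rewrite (DR_ext _ (fun y => (fun z => Rmax (vt m x) (1 + vt m z)) (x - y))).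
  - exact (DR_refl (fun z => Rmax (vt m x) (1 + vt m z)) x).
  - intros y Hy. rewrite Rmin_left in Hy by lra. rewrite Rmax_right in Hy by lra.
    rewrite IH by lra. reflexivity.
Qed.
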